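(* Let $k\ge 2$ and let $\mathrm{R}_{2k}=\{a_0,a_1,\dots,a_{2k-1}\}$ be the dihedral quandle of order $2k$, i.e. the set $\mathbb{Z}_{2k}$ with operation $a_i\cdot a_j=a_{(2j-i)\bmod 2k}$. In the integral quandle ring $\mathbb{Z}[\mathrm{R}_{2k}]$, let $e_i=a_i-a_0$ for $i=1,\dots,2k-1$. Then $e_i\cdot e_j=e_i\cdot e_{k+j}$ for all $j=1,2,\dots,k-1$ and all $i=1,2,\dots,2k-1$.
   Context: The quandle ring $\mathbb{Z}[A]$ of a quandle $A$ is the free abelian group on $A$ with multiplication given by the bilinear extension of the quandle operation: $\left(\sum_i r_i a_i\right)\cdot\left(\sum_j s_j a_j\right)=\sum_{i,j} r_i s_j (a_i\cdot a_j)$. *)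

(* Defs.v *)
From mathcomp Require Import all_boot all_order all_algebra.
Set Implicit Arguments. Unset Strict Implicit. Unset Printing Implicit Defensive.
Import GRing.Theory Num.Theory.
Local Open Scope ring_scope.

Definition dih_op (n : nat) (i j : 'I_n) : nat := ((2 * j + (n - i)) %% n)%N.

(* Integral quandle ring Z[R_n]: the free abelian group on 'I_n, represented
   by coefficient functions {ffun 'I_n -> int}; basis element a_i = qbasis i. *)
Definition qring (n : nat) := {ffun 'I_n -> int}.

Definition qbasis (n : nat) (i : 'I_n) : qring n := [ffun c => (c == i)%:Z].

Definition qmul (n : nat) (x y : qring n) : qring n :=
  [ffun c : 'I_n => \sum_(i : 'I_n) \sum_(j : 'I_n)
      if dih_op i j == nat_of_ord c then x i * y j else 0].

Definition qe (n : nat) (i : 'I_n) (h0 : (0 < n)%N) : qring n :=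
  qbasis i - qbasis (Ordinal h0).

(* Main.v *)
Require Import Defs.
From mathcomp Require Import all_boot all_order all_algebra.
Local Open Scope ring_scope.
Import GRing.Theory.

Lemma qmulB n (x y z : qring n) : qmul x (y - z) = qmul x y - qmul x z.
Proof.
apply/ffunP=> c; rewrite !ffunE -sumrB; apply: eq_bigr=> i _.
rewrite -sumrB; apply: eq_bigr=> j _; rewrite !ffunE.
by case: ifP=> _; rewrite ?mulrBr ?subr0.
Qed.

Lemma qmul_basis n (x : qring n) j :
  qmul x (qbasis j) = [ffun c : 'I_n => \sum_(i : 'I_n) if dih_op i j == nat_of_ord c then x i else 0].
Proof.
apply/ffunP=> c; rewrite !ffunE; apply: eq_bigr=> i _.
rewrite (bigD1 j) //= big1 ?addr0; last first.
  by move=> j' /negbTE hj; rewrite ffunE hj mulr0; case: ifP.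
by rewrite ffunE eqxx mulr1.
Qed.

Theorem lemma2p3 (k : nat) (hk : (2 <= k)%N) (h0 : (0 < 2 * k)%N)
    (i j : 'I_(2 * k)) :
  (1 <= i)%N -> (1 <= j <= k - 1)%N ->
  forall jk : 'I_(2 * k), nat_of_ord jk = (k + j)%N ->
  qmul (qe i h0) (qe j h0) = qmul (qe i h0) (qe jk h0).
Proof.
move=> _ _ jk hjk; rewrite /qe !qmulB; congr (_ - _).
rewrite !qmul_basis; apply/ffunP=> c; rewrite !ffunE; apply: eq_bigr=> i' _.
suff -> : dih_op i' jk = dih_op i' j by [].
rewrite /dih_op hjk mulnDr -addnA.
by rewrite modnDl.
Qed.
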